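(* Let $0\le b<1$ and $0<c<1$. Let $(X,L_1,\dots,L_n)$ be jointly distributed with $X$ finitely supported and $L_i\in\{0,1\}$, and let $\pi$ be a collaborating cryptogenography protocol with full transcript $T$. Suppose that for all $i\in\{1,\dots,n\}$ and all $x$ in the support of $X$, $\Pr(L_i=1\mid X=x)=b$, and that $\Pr(L_i=1\mid T=t,X=x)\le c$ for all $i$ and all $(t,x)$ with $\Pr(T=t,X=x)>0$. Then \[ I(X;T)\le \frac{-b\log(1-c)+c\log(1-b)}{c}\,n. \]
   Context: All logarithms are base $2$. Collaborating cryptogenography protocol: there are $n$ players $\mathrm{plr}_1,\dots,\mathrm{plr}_n$; a secret $X$ (finitely supported) and indicators $L_1,\dots,L_n\in\{0,1\}$ ($L_i=1$ means $\mathrm{plr}_i$ knows $X$) have a joint distribution. A protocol $\pi$ specifies, for every possible partial transcript $t^k=(t_1,\dots,t_k)$ (the tuple of the first $k$ messages): whether communication stops; if not, which player $\mathrm{plr}_i$ sends the next message; and probability distributions $p_?$ and $(p_x)_{x}$ on a finite message set (depending on $t^k$). $\mathrm{plr}_i$ draws the next message, with fresh independent randomness, from $p_?$ if $L_i=0$ and from $p_x$ if $L_i=1$ and $X=x$. There is a number $\mathrm{length}(\pi)$ such that the protocol always stops after at most that many messages. $T$ denotes the random full transcript. *)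

(* Defs.v *)
From HB Require Import structures.
From mathcomp Require Import all_boot.
From Stdlib Require Import Reals.

Set Implicit Arguments.
Unset Strict Implicit.
Unset Printing Implicit Defensive.

Local Open Scope R_scope.

Definition log2R (x : R) : R := ln x / ln 2.

Definition rsum {T : finType} (F : T -> R) : R := \big[Rplus/R0]_(x : T) F x.

Definition is_dist {T : finType} (p : T -> R) : Prop :=
  (forall m, 0 <= p m) /\ rsum p = 1.

(* For every partial transcript t (a list of
   messages): whether communication stops, who speaks next, the message
   distribution p_? (p_unk) used by a speaker not knowing X, and the
   distributions p_x (p_kn t x) used by a speaker knowing X = x. *)
Record protocol (n : nat) (X M : finType) := Protocol {
  stops : seq M -> bool;
  speaker : seq M -> 'I_n;
  p_unk : seq M -> M -> R;
  p_kn : seq M -> X -> M -> R }.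

Definition valid_protocol n (X M : finType) (pi : protocol n X M) (len : nat) : Prop :=
  (forall t : seq M, leq len (size t) -> stops pi t) /\
  (forall t : seq M, ~~ stops pi t ->
     is_dist (p_unk pi t) /\ forall x, is_dist (p_kn pi t x)).

Section Transcripts.
Variables (n : nat) (X M : finType) (pi : protocol n X M).

Definition msg_prob (x : X) (l : {ffun 'I_n -> bool}) (t : seq M) (m : M) : R :=
  if l (speaker pi t) then p_kn pi t x m else p_unk pi t m.

Fixpoint tp_aux (x : X) (l : {ffun 'I_n -> bool}) (pre rest : seq M) : R :=
  match rest with
  | [::] => if stops pi pre then 1 else 0
  | m :: r => if stops pi pre then 0
              else msg_prob x l pre m * tp_aux x l (rcons pre m) r
  end.

(* Pr(T = t | X = x, L = l) *)
Definition trans_prob (x : X) (l : {ffun 'I_n -> bool}) (t : seq M) : R :=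
  tp_aux x l [::] t.

Variable P : X -> {ffun 'I_n -> bool} -> R.  (* joint law of (X, L_1..L_n) *)

Definition pX (x : X) : R := rsum (fun l : {ffun 'I_n -> bool} => P x l).
Definition pXL (i : 'I_n) (x : X) : R :=
  rsum (fun l : {ffun 'I_n -> bool} => if l i then P x l else 0).
Definition pXT (x : X) (t : seq M) : R :=
  rsum (fun l : {ffun 'I_n -> bool} => P x l * trans_prob x l t).
Definition pLXT (i : 'I_n) (x : X) (t : seq M) : R :=
  rsum (fun l : {ffun 'I_n -> bool} => if l i then P x l * trans_prob x l t else 0).
Definition pT (t : seq M) : R := rsum (fun x : X => pXT x t).

Definition tsum (len : nat) (F : seq M -> R) : R :=
  \big[Rplus/R0]_(k < len.+1) \big[Rplus/R0]_(t : k.-tuple M) F (val t).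

(* mutual information I(X;T) (base 2); all transcripts have length <= len *)
Definition mutual_info (len : nat) : R :=
  tsum len (fun t => rsum (fun x : X =>
    if Rlt_dec 0 (pXT x t)
    then pXT x t * log2R (pXT x t / (pX x * pT t)) else 0)).

End Transcripts.

(* Main.v *)
Require Import Defs.
From HB Require Import structures.
From mathcomp Require Import all_boot.
From Stdlib Require Import Reals Lra FunctionalExtensionality.
Local Open Scope R_scope.
Set Implicit Arguments.
Unset Strict Implicit.

HB.instance Definition _ := Monoid.isComLaw.Build R R0 Rplus
  (fun a b c => esym (Rplus_assoc a b c)) Rplus_comm Rplus_0_l.
HB.instance Definition _ := Monoid.isMulLaw.Build R R0 Rmult Rmult_0_l Rmult_0_r.
HB.instance Definition _ := Monoid.isAddLaw.Build R Rmult Rplus Rmult_plus_distr_r Rmult_plus_distr_l.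

Lemma sum_le (I : finType) (F G : I -> R) :
  (forall i, F i <= G i) -> \big[Rplus/R0]_i F i <= \big[Rplus/R0]_i G i.
Proof.
move=> H; apply: (big_ind2 (fun x y => x <= y)) => //; first lra.
by move=> *; lra.
Qed.

Lemma sum_ge0 (I : finType) (F : I -> R) :
  (forall i, 0 <= F i) -> 0 <= \big[Rplus/R0]_i F i.
Proof.
move=> H; apply: (big_ind (fun x => 0 <= x)) => //; first lra.
by move=> *; lra.
Qed.

Lemma sum_term_le (I : finType) (F : I -> R) j :
  (forall i, 0 <= F i) -> F j <= \big[Rplus/R0]_i F i.
Proof.
move=> H; rewrite (bigD1 j) //=.
have : 0 <= \big[Rplus/R0]_(i | i != j) F i.
  by apply: (big_ind (fun x => 0 <= x)) => //; [lra| move=> *; lra].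
lra.
Qed.

Lemma sum_scal (I : finType) (F : I -> R) a :
  \big[Rplus/R0]_i (a * F i) = a * \big[Rplus/R0]_i F i.
Proof. by rewrite big_distrr. Qed.

Lemma sum_split (I : finType) (F G : I -> R) :
  \big[Rplus/R0]_i (F i + G i) = \big[Rplus/R0]_i F i + \big[Rplus/R0]_i G i.
Proof. by rewrite big_split. Qed.

Lemma sum_zero (I : finType) (F : I -> R) :
  (forall i, F i = 0) -> \big[Rplus/R0]_i F i = 0.
Proof. by move=> H; rewrite big1. Qed.

Lemma sum_const (n : nat) (a : R) : \big[Rplus/R0]_(i < n) a = INR n * a.
Proof.
elim: n => [|n IH]; first by rewrite big_ord0 /=; lra.
rewrite big_ord_recr IH S_INR /=; lra.
Qed.

Lemma tsum0 (M : finType) (H : seq M -> R) : tsum 0 H = H [::].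
Proof.
rewrite /tsum big_ord_recl big_ord0 Rplus_0_r /=.
rewrite (big_pred1 [tuple]) //= => t; apply/esym/eqP; exact: tuple0.
Qed.

Lemma tuple_sumS (M : finType) k (F : seq M -> R) :
  \big[Rplus/R0]_(t : k.+1.-tuple M) F (val t) =
  \big[Rplus/R0]_(m : M) \big[Rplus/R0]_(t : k.-tuple M) F (m :: val t).
Proof.
rewrite pair_big /=.
rewrite (reindex (fun p : M * k.-tuple M => [tuple of p.1 :: p.2])) //=.
exists (fun t : k.+1.-tuple M => (thead t, [tuple of behead t])).
  by move=> [m t] _ /=; congr pair; apply: val_inj.
by move=> t _; apply: val_inj => /=; rewrite [in RHS](tuple_eta t).
Qed.

Lemma tsumS (M : finType) d (H : seq M -> R) :
  tsum d.+1 H = H [::] + \big[Rplus/R0]_(m : M) tsum d (fun r => H (m :: r)).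
Proof.
rewrite /tsum big_ord_recl.
have -> : \big[Rplus/R0]_(t : (nat_of_ord (@ord0 d.+1)).-tuple M) H (val t) = H [::].
  rewrite (big_pred1 [tuple]) //= => t; apply/esym/eqP; exact: tuple0.
congr Rplus.
rewrite exchange_big /=.
apply: eq_bigr => i _.
change (\big[Rplus/R0]_(t : (nat_of_ord i).+1.-tuple M) H (val t) = \big[Rplus/R0]_(m : M) \big[Rplus/R0]_(t : (nat_of_ord i).-tuple M) H (m :: val t)); exact: tuple_sumS.
Qed.

Lemma tsum_le (M : finType) d (F G : seq M -> R) :
  (forall r, F r <= G r) -> tsum d F <= tsum d G.
Proof. by move=> H; apply: sum_le => k; apply: sum_le. Qed.

Lemma tsum_ext (M : finType) d (F G : seq M -> R) :
  (forall r, F r = G r) -> tsum d F = tsum d G.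
Proof. by move=> H; apply: eq_bigr => k _; apply: eq_bigr. Qed.

Lemma tsum_scal (M : finType) d (F : seq M -> R) a :
  tsum d (fun r => a * F r) = a * tsum d F.
Proof.
rewrite /tsum -sum_scal; apply: eq_bigr => k _; by rewrite sum_scal.
Qed.

Lemma tsum_split (M : finType) d (F G : seq M -> R) :
  tsum d (fun r => F r + G r) = tsum d F + tsum d G.
Proof.
rewrite /tsum -sum_split; apply: eq_bigr => k _; by rewrite sum_split.
Qed.

Lemma tsum_sum (M I : finType) d (F : I -> seq M -> R) :
  tsum d (fun r => \big[Rplus/R0]_(i : I) F i r) =
  \big[Rplus/R0]_(i : I) tsum d (F i).
Proof.
rewrite /tsum exchange_big; apply: eq_bigr => k _; by rewrite exchange_big.
Qed.

Lemma tsum_zero (M : finType) d (F : seq M -> R) :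
  (forall r, F r = 0) -> tsum d F = 0.
Proof. by move=> H; apply: sum_zero => k; apply: sum_zero. Qed.

Lemma tsum_ge0 (M : finType) d (F : seq M -> R) :
  (forall r, 0 <= F r) -> 0 <= tsum d F.
Proof. by move=> H; apply: sum_ge0 => k; apply: sum_ge0. Qed.

Lemma tsum_only_nil (M : finType) d (F : seq M -> R) :
  (forall m r, F (m :: r) = 0) -> tsum d F = F [::].
Proof.
move=> H; case: d => [|d]; first exact: tsum0.
rewrite tsumS sum_zero ?Rplus_0_r // => m; exact: tsum_zero.
Qed.

Definition Wn (n : nat) (X : finType) (a : X -> {ffun 'I_n -> bool} -> R) (x : X) : R :=
  rsum (fun l => a x l).
Definition msk (n : nat) (X : finType) (i : 'I_n) (a : X -> {ffun 'I_n -> bool} -> R) :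
  X -> {ffun 'I_n -> bool} -> R := fun x l => if l i then 0 else a x l.
Definition PTn (n : nat) (X : finType) (a : X -> {ffun 'I_n -> bool} -> R) : R :=
  rsum (fun x : X => Wn a x).
Definition Lam (n : nat) (X : finType) (a : X -> {ffun 'I_n -> bool} -> R) : R :=
  rsum (fun x : X => Wn a x * ln (Wn a x / PTn a) +
     \big[Rplus/R0]_(i < n) (Wn a x * ln (Wn (msk i a) x / Wn a x))).
Definition tw (n : nat) (X M : finType) (pi : protocol n X M)
  (a : X -> {ffun 'I_n -> bool} -> R) (pre r : seq M) : X -> {ffun 'I_n -> bool} -> R :=
  fun x l => a x l * tp_aux pi x l pre r.
Definition child (n : nat) (X M : finType) (pi : protocol n X M)
  (a : X -> {ffun 'I_n -> bool} -> R) (pre : seq M) (m : M) : X -> {ffun 'I_n -> bool} -> R :=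
  fun x l => a x l * msg_prob pi x l pre m.

Lemma msg_prob_ge0 n (X M : finType) (pi : protocol n X M) len x l pre m :
  valid_protocol pi len -> ~~ stops pi pre -> 0 <= msg_prob pi x l pre m.
Proof.
move=> [_ Hd] Hs; have [[Hu _] Hk] := Hd pre Hs.
rewrite /msg_prob; case: (l _) => //; by have [? _] := Hk x.
Qed.

Lemma msg_prob_sum n (X M : finType) (pi : protocol n X M) len x l pre :
  valid_protocol pi len -> ~~ stops pi pre ->
  \big[Rplus/R0]_(m : M) msg_prob pi x l pre m = 1.
Proof.
move=> [_ Hd] Hs; have [[_ Hu] Hk] := Hd pre Hs.
rewrite /msg_prob; case: (l _) => //; by have [_ ?] := Hk x.
Qed.

Lemma tp_ge0 n (X M : finType) (pi : protocol n X M) len x l pre r :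
  valid_protocol pi len -> 0 <= tp_aux pi x l pre r.
Proof.
move=> Hv; elim: r pre => [|m r IH] pre /=; first by case: (stops _ _); lra.
case Hs: (stops _ _); first lra.
apply: Rmult_le_pos; [apply: (msg_prob_ge0 _ _ _ Hv); by rewrite Hs| exact: IH].
Qed.

Lemma tp_total n (X M : finType) (pi : protocol n X M) len x l d pre :
  valid_protocol pi len -> leq len (addn d (size pre)) ->
  tsum d (tp_aux pi x l pre) = 1.
Proof.
move=> Hv; elim: d pre => [|d IH] pre Hb.
  rewrite tsum0 /=; case: Hv => Hl _; by rewrite Hl.
rewrite tsumS /=; case Hs: (stops _ _).
  by rewrite sum_zero ?Rplus_0_r // => m; apply: tsum_zero.
rewrite Rplus_0_l -(msg_prob_sum x l Hv (negbT Hs)).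
apply: eq_bigr => m _.
rewrite tsum_scal IH ?Rmult_1_r // size_rcons addnS -addSn.
by [].
Qed.

Lemma tw_cons n (X M : finType) (pi : protocol n X M) a pre m r :
  ~~ stops pi pre -> tw pi a pre (m :: r) = tw pi (child pi a pre m) (rcons pre m) r.
Proof.
move=> Hs; apply: functional_extensionality => x; apply: functional_extensionality => l.
rewrite /tw /child /= (negbTE Hs); ring.
Qed.

Lemma msk_tw n (X M : finType) (pi : protocol n X M) i a pre r :
  msk i (tw pi a pre r) = tw pi (msk i a) pre r.
Proof.
apply: functional_extensionality => x; apply: functional_extensionality => l.
rewrite /msk /tw; case: (l i) => //; ring.
Qed.

Lemma msk_child n (X M : finType) (pi : protocol n X M) i a pre m :
  msk i (child pi a pre m) = child pi (msk i a) pre m.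
Proof.
apply: functional_extensionality => x; apply: functional_extensionality => l.
rewrite /msk /child; case: (l i) => //; ring.
Qed.

Lemma Wn_total n (X M : finType) (pi : protocol n X M) len a d pre x :
  valid_protocol pi len -> leq len (addn d (size pre)) ->
  tsum d (fun r => Wn (tw pi a pre r) x) = Wn a x.
Proof.
move=> Hv Hb; rewrite /Wn /rsum /tw tsum_sum; apply: eq_bigr => l _.
by rewrite tsum_scal (tp_total x l Hv Hb) Rmult_1_r.
Qed.

Lemma Wn_child_sum n (X M : finType) (pi : protocol n X M) len a pre x :
  valid_protocol pi len -> ~~ stops pi pre ->
  \big[Rplus/R0]_(m : M) Wn (child pi a pre m) x = Wn a x.
Proof.
move=> Hv Hs; rewrite /Wn /rsum /child exchange_big; apply: eq_bigr => l _.
by rewrite sum_scal (msg_prob_sum x l Hv Hs) Rmult_1_r.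
Qed.

Lemma Wn_ge0 n (X : finType) (a : X -> {ffun 'I_n -> bool} -> R) x :
  (forall x l, 0 <= a x l) -> 0 <= Wn a x.
Proof. by move=> H; apply: sum_ge0. Qed.

Lemma node_pos n (X M : finType) (pi : protocol n X M) len a d pre c :
  valid_protocol pi len -> leq len (addn d (size pre)) ->
  (forall r x i, (1 - c) * Wn (tw pi a pre r) x <= Wn (msk i (tw pi a pre r)) x) ->
  forall x i, (1 - c) * Wn a x <= Wn (msk i a) x.
Proof.
move=> Hv Hb H x i.
rewrite -(Wn_total a x Hv Hb) -(Wn_total (msk i a) x Hv Hb) -tsum_scal.
apply: tsum_le => r; by rewrite -msk_tw.
Qed.



Lemma ln_le_x1 y : 0 < y -> ln y <= y - 1.
Proof. move=> Hy; have := exp_ineq1_le (ln y); rewrite exp_ln //; lra. Qed.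

Lemma logsum_term a b A B :
  0 <= a -> 0 <= b -> (0 < a -> 0 < b) -> 0 < A -> 0 < B ->
  a * ln (b / a) <= ln (B / A) * a + ((A / B) * b + (-1) * a).
Proof.
move=> Ha Hb Hab HA HB.
case: (Req_dec a 0) => [->|Ha0].
  have : 0 <= A / B * b by apply: Rmult_le_pos => //; apply: Rlt_le; apply: Rdiv_lt_0_compat.
  lra.
have Hap : 0 < a by lra.
have Hbp := Hab Hap.
have E : b / a = B / A * (b * A / (a * B)) by field; lra.
rewrite E ln_mult; last first.
  apply: Rdiv_lt_0_compat; apply: Rmult_lt_0_compat => //.
  by apply: Rdiv_lt_0_compat.
have Hle : ln (b * A / (a * B)) <= b * A / (a * B) - 1.
  apply: ln_le_x1; apply: Rdiv_lt_0_compat; exact: Rmult_lt_0_compat.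
have -> : ln (B / A) * a + (A / B * b + -1 * a) = a * ln (B / A) + a * (b * A / (a * B) - 1).
  field; lra.
rewrite Rmult_plus_distr_l.
apply: Rplus_le_compat_l; apply: Rmult_le_compat_l => //.
Qed.

Lemma logsum (I : finType) (a b : I -> R) :
  (forall i, 0 <= a i) -> (forall i, 0 <= b i) -> (forall i, 0 < a i -> 0 < b i) ->
  \big[Rplus/R0]_i (a i * ln (b i / a i)) <=
  (\big[Rplus/R0]_i a i) * ln ((\big[Rplus/R0]_i b i) / (\big[Rplus/R0]_i a i)).
Proof.
move=> Ha Hb Hab.
set A := \big[Rplus/R0]_i a i; set B := \big[Rplus/R0]_i b i.
have HA : 0 <= A by apply: sum_ge0.
have HB : 0 <= B by apply: sum_ge0.
case: (Req_dec A 0) => HA0.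
  have Hai : forall i, a i = 0.
    by move=> i; have := sum_term_le i Ha; rewrite -/A; have := Ha i; lra.
  rewrite HA0 Rmult_0_l sum_zero; first lra.
  by move=> i; rewrite Hai Rmult_0_l.
have HAp : 0 < A by lra.
have HBp : 0 < B.
  case: (Req_dec B 0) => HB0; last lra.
  exfalso; apply: HA0; rewrite /A sum_zero // => i.
  have := sum_term_le i Hb; rewrite -/B HB0 => Hbi.
  case: (Req_dec (a i) 0) => // Hai.
  have := Hab i; have := Ha i; have := Hb i; lra.
apply: Rle_trans (sum_le (fun i => logsum_term (Ha i) (Hb i) (@Hab i) HAp HBp)) _.
rewrite !sum_split !sum_scal -/A -/B.
right; field; lra.
Qed.

(* leaf bound via concavity of ln *)
Lemma leaf_bound c W E :
  0 < c < 1 -> 0 <= W -> (1 - c) * W <= E -> E <= W ->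
  ln (1 - c) / c * (W - E) <= W * ln (E / W).
Proof.
move=> Hc HW H1 H2.
case: (Req_dec W 0) => [HW0|HW0].
  have -> : E = 0 by subst; lra.
  rewrite HW0; lra.
have HWp : 0 < W by lra.
have HEp : 0 < E.
  have : 0 < (1 - c) * W by apply: Rmult_lt_0_compat; lra.
  lra.
set u := E / W.
have Hu : 0 < u by apply: Rdiv_lt_0_compat.
have HuW : u * W = E by rewrite /u; field; lra.
have Hu1 : u <= 1 by nra.
have Hcu : 1 - c <= u by nra.
set th := (1 - u) / c.
have Hthc : th * c = 1 - u by rewrite /th; field; lra.
have Hth0 : 0 <= th by nra.
have Hth1 : 1 - th >= 0 by nra.
have Hcomb : 1 - th + th * (1 - c) = u by rewrite /th; field; lra.
have L1 : ln (/ u) <= / u - 1 by apply: ln_le_x1; apply: Rinv_0_lt_compat.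
have L2 : ln ((1 - c) / u) <= (1 - c) / u - 1 by apply: ln_le_x1; apply: Rdiv_lt_0_compat; lra.
have K : (1 - th) * ln (/ u) + th * ln ((1 - c) / u) <= 0.
  apply: Rle_trans (Rplus_le_compat _ _ _ _ (Rmult_le_compat_l _ _ _ (Rge_le _ _ Hth1) L1)
                                    (Rmult_le_compat_l _ _ _ Hth0 L2)) _.
  have -> : (1 - th) * (/ u - 1) + th * ((1 - c) / u - 1) = (1 - th + th * (1 - c)) / u - 1 by field; lra.
  rewrite Hcomb; right; field; lra.
rewrite ln_Rinv // in K.
rewrite /Rdiv ln_mult ?ln_Rinv // in K; last by apply: Rinv_0_lt_compat.
2: lra.
have Hlnu : th * ln (1 - c) <= ln u by lra.
rewrite -HuW.
have -> : ln (1 - c) / c * (W - u * W) = W * (th * ln (1 - c)).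
  rewrite /th; field; lra.
by apply: Rmult_le_compat_l; lra.
Qed.



Lemma sum_le_P (I : finType) (P : pred I) (F G : I -> R) :
  (forall i, P i -> F i <= G i) ->
  \big[Rplus/R0]_(i | P i) F i <= \big[Rplus/R0]_(i | P i) G i.
Proof.
move=> H; apply: (big_ind2 (fun x y => x <= y)) => //; first lra.
by move=> *; lra.
Qed.

Lemma posE c W E : c < 1 -> (1 - c) * W <= E -> 0 < W -> 0 < E.
Proof. move=> Hc H HW; have : 0 < (1 - c) * W by apply: Rmult_lt_0_compat; lra. lra. Qed.

Lemma Lam_split n (X : finType) (a : X -> {ffun 'I_n -> bool} -> R) (k : 'I_n) c :
  c < 1 -> (forall x l, 0 <= a x l) -> (forall x, (1 - c) * Wn a x <= Wn (msk k a) x) ->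
  Lam a = rsum (fun x => Wn a x * ln (Wn (msk k a) x / PTn a) +
     \big[Rplus/R0]_(i < n | i != k) (Wn a x * ln (Wn (msk i a) x / Wn a x))).
Proof.
move=> Hc Ha Hp; rewrite /Lam /rsum; apply: eq_bigr => x _.
rewrite (bigD1 k) //= -Rplus_assoc; congr Rplus.
have HW := Wn_ge0 x Ha.
case: (Req_dec (Wn a x) 0) => [->|HW0]; first lra.
have HWp : 0 < Wn a x by lra.
have HE := posE Hc (Hp x) HWp.
have HPT : 0 < PTn a.
  apply: Rlt_le_trans HWp _; apply: (sum_term_le x (F := fun x => Wn a x)) => y.
  exact: Wn_ge0.
rewrite -Rmult_plus_distr_l -ln_mult; try by apply: Rdiv_lt_0_compat.
congr (_ * ln _); field; lra.
Qed.

Lemma child_ge0 n (X M : finType) (pi : protocol n X M) len a pre :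
  valid_protocol pi len -> ~~ stops pi pre -> (forall x l, 0 <= a x l) ->
  forall m x l, 0 <= child pi a pre m x l.
Proof.
move=> Hv Hs Ha m x l; rewrite /child; apply: Rmult_le_pos => //.
exact: (msg_prob_ge0 _ _ _ Hv).
Qed.

Lemma Wn_mask_child_sum n (X M : finType) (pi : protocol n X M) len a pre i x :
  valid_protocol pi len -> ~~ stops pi pre ->
  \big[Rplus/R0]_(m : M) Wn (msk i (child pi a pre m)) x = Wn (msk i a) x.
Proof.
move=> Hv Hs; rewrite -(Wn_child_sum _ _ Hv Hs); apply: eq_bigr => m _.
by rewrite msk_child.
Qed.

Lemma PTn_child_sum n (X M : finType) (pi : protocol n X M) len a pre :
  valid_protocol pi len -> ~~ stops pi pre ->
  \big[Rplus/R0]_(m : M) PTn (child pi a pre m) = PTn a.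
Proof.
move=> Hv Hs; rewrite /PTn /rsum exchange_big; apply: eq_bigr => x _.
exact: (Wn_child_sum _ _ Hv Hs).
Qed.

Lemma mask_speaker_child n (X M : finType) (pi : protocol n X M) a pre m x :
  Wn (msk (speaker pi pre) (child pi a pre m)) x = Wn (msk (speaker pi pre) a) x * p_unk pi pre m.
Proof.
rewrite /Wn /rsum Rmult_comm -sum_scal; apply: eq_bigr => l _.
rewrite /msk /child /msg_prob; case: (l _); ring.
Qed.

Lemma node_ineq n (X M : finType) (pi : protocol n X M) len a pre c :
  valid_protocol pi len -> ~~ stops pi pre -> c < 1 ->
  (forall x l, 0 <= a x l) ->
  (forall x i, (1 - c) * Wn a x <= Wn (msk i a) x) ->
  (forall m x i, (1 - c) * Wn (child pi a pre m) x <= Wn (msk i (child pi a pre m)) x) ->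
  \big[Rplus/R0]_(m : M) Lam (child pi a pre m) <= Lam a.
Proof.
move=> Hv Hs Hc Ha Hp Hpc.
set k := speaker pi pre.
have Hac := child_ge0 Hv Hs Ha.
rewrite (Lam_split (k:=k) Hc Ha (fun x => Hp x k)).
under eq_bigr => m _ do rewrite (Lam_split (k:=k) Hc (Hac m) (fun x => Hpc m x k)).
rewrite /rsum.
under eq_bigr => m _ do rewrite sum_split.
rewrite sum_split sum_split.
apply: Rplus_le_compat.
-
  set PT := PTn a.
  set Wm := fun m x => Wn (child pi a pre m) x.
  set PTm := fun m => PTn (child pi a pre m).
  set pu := p_unk pi pre.
  have Hpu0 : forall m, 0 <= pu m.
    by move=> m; case: Hv => _ /(_ pre Hs) [[Hu _] _]; apply: Hu.
  have Hpu1 : \big[Rplus/R0]_m pu m = 1.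
    by case: Hv => _ /(_ pre Hs) [[_ Hu] _]; apply: Hu.
  have HWm0 : forall m x, 0 <= Wm m x by move=> m x; apply: Wn_ge0.
  have HPTm0 : forall m, 0 <= PTm m by move=> m; apply: sum_ge0 => x; apply: HWm0.
  have HPTsum : \big[Rplus/R0]_m PTm m = PT by exact: (PTn_child_sum a Hv Hs).
  have HEk0 : forall x, 0 <= Wn (msk k a) x.
    move=> x; apply: Wn_ge0 => y l; rewrite /msk; case: (l k) => //; lra.
  have Hkey : forall m x, 0 < Wm m x ->
      0 < pu m /\ 0 < Wn (msk k a) x /\ 0 < PTm m /\ 0 < PT.
    move=> m x HW.
    have HE := posE Hc (Hpc m x k) HW.
    rewrite mask_speaker_child in HE.
    have Hpm : 0 < pu m.
      case: (Rle_lt_dec (pu m) 0) => // H.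
      have H0 : pu m = 0 by have := Hpu0 m; lra.
      rewrite /pu in H0; rewrite H0 Rmult_0_r in HE; lra.
    have HEk : 0 < Wn (msk k a) x.
      case: (Rle_lt_dec (Wn (msk k a) x) 0) => // H.
      have : Wn (msk k a) x = 0 by have := HEk0 x; lra.
      move=> H0; rewrite H0 Rmult_0_l in HE; lra.
    have HPm : 0 < PTm m.
      apply: Rlt_le_trans HW _; exact: (sum_term_le x (F := fun x => Wm m x)).
    split => //; split => //; split => //.
    apply: Rlt_le_trans HPm _; rewrite -HPTsum; exact: (sum_term_le m (F := PTm)).
  have Hterm : forall m x,
      Wm m x * ln (Wn (msk k (child pi a pre m)) x / PTm m) <=
      Wm m x * ln (Wn (msk k a) x / PT) + Wm m x * ln (pu m * PT / PTm m).
    move=> m x; case: (Req_dec (Wm m x) 0) => [->|HW0]; first lra.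
    have HWp : 0 < Wm m x by have := HWm0 m x; lra.
    have [Hpm [HEk [HPm HPT]]] := Hkey m x HWp.
    rewrite -Rmult_plus_distr_l -ln_mult; last first.
      by apply: Rdiv_lt_0_compat => //; apply: Rmult_lt_0_compat.
      by apply: Rdiv_lt_0_compat.
    rewrite mask_speaker_child -/k; right; congr (_ * ln _); rewrite /pu; field; lra.
  apply: Rle_trans (sum_le (fun m => sum_le (fun x => Hterm m x))) _.
  under eq_bigr => m _ do rewrite sum_split.
  rewrite sum_split exchange_big /=.
  have -> : \big[Rplus/R0]_x \big[Rplus/R0]_m (Wm m x * ln (Wn (msk k a) x / PT)) =
            \big[Rplus/R0]_x (Wn a x * ln (Wn (msk k a) x / PT)).
    apply: eq_bigr => x _.
    under eq_bigr => m _ do rewrite Rmult_comm.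
    by rewrite sum_scal (Wn_child_sum _ _ Hv Hs) Rmult_comm.
  have -> : \big[Rplus/R0]_m \big[Rplus/R0]_x (Wm m x * ln (pu m * PT / PTm m)) =
            \big[Rplus/R0]_m (PTm m * ln (pu m * PT / PTm m)).
    apply: eq_bigr => m _.
    under eq_bigr => x _ do rewrite Rmult_comm.
    by rewrite sum_scal Rmult_comm.
  have Hls : \big[Rplus/R0]_m (PTm m * ln (pu m * PT / PTm m)) <= 0.
    apply: Rle_trans (logsum (a := PTm) (b := fun m => pu m * PT) HPTm0 _ _) _.
    + move=> m; apply: Rmult_le_pos => //; rewrite -HPTsum; exact: sum_ge0.
    + move=> m HPm.
      case: (Rlt_dec 0 (pu m * PT)) => // Hn; exfalso.
      have : PTm m <= 0.
        rewrite /PTm /PTn /rsum.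
        apply: Rle_trans (sum_le (G := fun _ => 0) _) _; last by rewrite sum_zero //; lra.
        move=> x; case: (Rle_lt_dec (Wm m x) 0) => // HWx.
        have [Hpm [_ [_ HPT]]] := Hkey m x HWx.
        by exfalso; apply: Hn; apply: Rmult_lt_0_compat.
      lra.
    + rewrite HPTsum.
      have -> : \big[Rplus/R0]_m (pu m * PT) = PT.
        under eq_bigr => m _ do rewrite Rmult_comm.
        by rewrite sum_scal Hpu1 Rmult_1_r.
      case: (Req_dec PT 0) => [->|H0]; first lra.
      rewrite /Rdiv Rinv_r // ln_1; lra.
  lra.
- (* other players: log-sum *)
  rewrite exchange_big /=; apply: sum_le => x.
  rewrite exchange_big /=; apply: sum_le_P => i Hik.
  apply: Rle_trans (logsum (a := fun m => Wn (child pi a pre m) x)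
                           (b := fun m => Wn (msk i (child pi a pre m)) x) _ _ _) _.
  + by move=> m; apply: Wn_ge0.
  + move=> m; apply: Wn_ge0 => y l; rewrite /msk; case: (l i); [lra|exact: Hac].
  + move=> m HW; exact: (posE Hc (Hpc m x i) HW).
  + by rewrite (Wn_child_sum _ _ Hv Hs) (Wn_mask_child_sum _ _ _ Hv Hs); lra.
Qed.



Lemma Lam_zero n (X : finType) (b : X -> {ffun 'I_n -> bool} -> R) :
  (forall x l, b x l = 0) -> Lam b = 0.
Proof.
move=> H; have HW : forall x, Wn b x = 0 by move=> x; apply: sum_zero => l; apply: H.
rewrite /Lam /rsum sum_zero // => x; rewrite HW Rmult_0_l Rplus_0_l.
by apply: sum_zero => i; rewrite ?HW Rmult_0_l.
Qed.

Lemma tree n (X M : finType) (pi : protocol n X M) len c :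
  c < 1 -> valid_protocol pi len ->
  forall d pre a, (forall x l, 0 <= a x l) -> leq len (addn d (size pre)) ->
  (forall r x i, (1 - c) * Wn (tw pi a pre r) x <= Wn (msk i (tw pi a pre r)) x) ->
  tsum d (fun r => Lam (tw pi a pre r)) <= Lam a.
Proof.
move=> Hc Hv; elim=> [|d IH] pre a Ha Hb Hl.
- have Hs : stops pi pre by case: Hv => Hlen _; apply: Hlen.
  rewrite tsum0; right; congr Lam.
  apply: functional_extensionality => x; apply: functional_extensionality => l.
  by rewrite /tw /= Hs Rmult_1_r.
case Hs: (stops pi pre).
  rewrite tsum_only_nil.
    right; congr Lam.
    apply: functional_extensionality => x; apply: functional_extensionality => l.
    by rewrite /tw /= Hs Rmult_1_r.
  by move=> m r; apply: Lam_zero => x l; rewrite /tw /= Hs Rmult_0_r.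
have Hns : ~~ stops pi pre by rewrite Hs.
rewrite tsumS Lam_zero; last by move=> x l; rewrite /tw /= Hs Rmult_0_r.
rewrite Rplus_0_l.
have Hbc : forall m, leq len (addn d (size (rcons pre m))).
  by move=> m; rewrite size_rcons addnS -addSn.
have Hac := child_ge0 Hv Hns Ha.
have Hlc : forall m r x i, (1 - c) * Wn (tw pi (child pi a pre m) (rcons pre m) r) x <=
                           Wn (msk i (tw pi (child pi a pre m) (rcons pre m) r)) x.
  by move=> m r x i; rewrite -tw_cons //; apply: Hl.
apply: Rle_trans (sum_le (G := fun m => Lam (child pi a pre m)) _) _.
  move=> m.
  have -> : tsum d (fun r => Lam (tw pi a pre (m :: r))) =
            tsum d (fun r => Lam (tw pi (child pi a pre m) (rcons pre m) r)).
    by apply: tsum_ext => r; rewrite tw_cons.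
  exact: IH (Hac m) (Hbc m) (Hlc m).
apply: (node_ineq Hv Hns Hc Ha).
- exact: (node_pos Hv Hb Hl).
- move=> m; exact: (node_pos Hv (Hbc m) (Hlc m)).
Qed.



Lemma final_bound (b c : R) (n : nat) (X M : finType)
  (P : X -> {ffun 'I_n -> bool} -> R) (pi : protocol n X M) (len : nat) :
  0 <= b < 1 -> 0 < c < 1 ->
  (forall x l, 0 <= P x l) ->
  rsum (fun x => pX P x) = 1 ->
  valid_protocol pi len ->
  (forall (i : 'I_n) (x : X), 0 < pX P x -> pXL P i x / pX P x = b) ->
  (forall (i : 'I_n) (x : X) (t : seq M), 0 < pXT pi P x t ->
      pLXT pi P i x t / pXT pi P x t <= c) ->
  mutual_info pi P len * ln 2 <= INR n * ln (1 - b) - ln (1 - c) / c * (INR n * b).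
Proof.
move=> Hb Hc HP Hsum Hv HbX Hpost.
have Hln2 : 0 < ln 2 by have := ln_lt_2; lra.
have HpX0 : forall x, 0 <= pX P x by move=> x; apply: sum_ge0 => l; apply: HP.
have Htp0 : forall x l t, 0 <= tp_aux pi x l [::] t by move=> *; apply: tp_ge0 Hv.
have HW0 : forall x t, 0 <= pXT pi P x t.
  by move=> x t; apply: sum_ge0 => l; apply: Rmult_le_pos; [apply: HP|apply: Htp0].
have HL0 : forall i x t, 0 <= pLXT pi P i x t.
  move=> i x t; apply: sum_ge0 => l; case: (l i); [apply: Rmult_le_pos; [apply: HP|apply: Htp0]| lra].
have HWE : forall i x t, Wn (msk i (tw pi P [::] t)) x = pXT pi P x t - pLXT pi P i x t.
  move=> i x t; rewrite /pXT /pLXT /Wn /rsum /trans_prob.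
  have -> : \big[Rplus/R0]_(l : {ffun 'I_n -> bool}) (P x l * tp_aux pi x l [::] t) =
            \big[Rplus/R0]_(l : {ffun 'I_n -> bool}) ((if l i then 0 else P x l * tp_aux pi x l [::] t) +
                              (if l i then P x l * tp_aux pi x l [::] t else 0)).
    by apply: eq_bigr => l _; case: (l i); lra.
  rewrite sum_split /msk /tw; lra.
have HE0 : forall i x t, 0 <= Wn (msk i (tw pi P [::] t)) x.
  move=> i x t; apply: sum_ge0 => l; rewrite /msk /tw; case: (l i); [lra|apply: Rmult_le_pos; [apply: HP|apply: Htp0]].
have HWEP : forall i x, Wn (msk i P) x = pX P x - pXL P i x.
  move=> i x; rewrite /pX /pXL /Wn /rsum.
  have -> : \big[Rplus/R0]_(l : {ffun 'I_n -> bool}) P x l =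
            \big[Rplus/R0]_(l : {ffun 'I_n -> bool}) ((if l i then 0 else P x l) + (if l i then P x l else 0)).
    by apply: eq_bigr => l _; case: (l i); lra.
  rewrite sum_split /msk; lra.
have HpXL : forall i x, pXL P i x = b * pX P x.
  move=> i x; case: (Req_dec (pX P x) 0) => [H0|H0].
    have : 0 <= Wn (msk i P) x by apply: sum_ge0 => l; rewrite /msk; case: (l i); [lra|apply: HP].
    have : 0 <= pXL P i x by apply: sum_ge0 => l; case: (l i); [apply: HP|lra].
    rewrite HWEP H0; lra.
  have Hp : 0 < pX P x by have := HpX0 x; lra.
  have := HbX i x Hp; move=> <-; field; lra.
have Hleaf : forall t x i, (1 - c) * Wn (tw pi P [::] t) x <= Wn (msk i (tw pi P [::] t)) x.
  move=> t x i; rewrite HWE.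
  change (Wn (tw pi P [::] t) x) with (pXT pi P x t).
  case: (Rle_lt_dec (pXT pi P x t) 0) => HW.
    have : pXT pi P x t = 0 by have := HW0 x t; lra.
    move=> ->; have := HE0 i x t; rewrite HWE; lra.
  have := Hpost i x t HW => Hq.
  have : pLXT pi P i x t <= c * pXT pi P x t.
    have -> : pLXT pi P i x t = pLXT pi P i x t / pXT pi P x t * pXT pi P x t by field; lra.
    apply: Rmult_le_compat_r; lra.
  lra.
have Hbud : leq len (addn len (size (@nil M))) by rewrite addn0.
have Htree := tree (proj2 Hc) Hv HP Hbud Hleaf.
have LamP : Lam P = rsum (fun x => pX P x * ln (pX P x)) + INR n * ln (1 - b).
  rewrite /Lam.
  have HPT : PTn P = 1 by exact: Hsum.
  rewrite HPT /rsum.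
  rewrite (eq_bigr (fun x => pX P x * ln (pX P x) + INR n * ln (1 - b) * pX P x)); last first.
    move=> x _.
    change (Wn P x) with (pX P x).
    rewrite /Rdiv Rinv_1 Rmult_1_r.
    under eq_bigr => i _ do rewrite HWEP HpXL.
    case: (Req_dec (pX P x) 0) => [H0|H0].
      rewrite H0 sum_zero; first by rewrite Rmult_0_l Rmult_0_r; lra.
      by move=> i; rewrite Rmult_0_l.
    have -> : (pX P x - b * pX P x) * / pX P x = 1 - b by field.
    rewrite sum_const; ring.
  rewrite sum_split sum_scal.
  change (\big[Rplus/R0]_x pX P x) with (rsum (fun x => pX P x)); rewrite Hsum; ring.
set A := fun t => rsum (fun x => pXT pi P x t * ln (pXT pi P x t / pT pi P t)).
set B := fun t => rsum (fun x => \big[Rplus/R0]_(i < n)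
            (pXT pi P x t * ln (Wn (msk i (tw pi P [::] t)) x / pXT pi P x t))).
have LamL : forall t, Lam (tw pi P [::] t) = A t + B t by move=> t; exact: sum_split.
have HBb : forall t, ln (1 - c) / c * rsum (fun x => \big[Rplus/R0]_(i < n) pLXT pi P i x t) <= B t.
  move=> t; rewrite /B /rsum -sum_scal; apply: sum_le => x.
  rewrite -sum_scal; apply: sum_le => i.
  have := leaf_bound Hc (HW0 x t) (Hleaf t x i).
  rewrite HWE; move=> H; apply: Rle_trans (H _) => //.
  - right; congr (_ * _); ring.
  - have := HL0 i x t; lra.
have HtL : forall i x, tsum len (fun t => pLXT pi P i x t) = pXL P i x.
  move=> i x.
  have H := Wn_total (fun x l => if l i then P x l else 0) x Hv Hbud.
  change (pXL P i x) with (Wn (fun x l => if l i then P x l else 0) x); rewrite -H.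
  apply: tsum_ext => t; rewrite /pLXT /Wn /tw /rsum.
  by apply: eq_bigr => l _; case: (l i) => //; rewrite Rmult_0_l.
have HtW : forall x, tsum len (fun t => pXT pi P x t) = pX P x.
  move=> x; exact: (Wn_total P x Hv Hbud).
have HtB : ln (1 - c) / c * (INR n * b) <= tsum len B.
  apply: Rle_trans (tsum_le len HBb).
  rewrite tsum_scal /rsum tsum_sum.
  right; congr (_ * _).
  under eq_bigr => x _ do rewrite tsum_sum.
  under eq_bigr => x _ do under eq_bigr => i _ do rewrite HtL HpXL.
  under eq_bigr => x _ do rewrite sum_const.
  under eq_bigr => x _ do rewrite -Rmult_assoc.
  by rewrite sum_scal; change (\big[Rplus/R0]_x pX P x) with (rsum (fun x => pX P x)); rewrite Hsum Rmult_1_r.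
have MI : mutual_info pi P len =
    / ln 2 * tsum len A + (- / ln 2) * rsum (fun x => pX P x * ln (pX P x)).
  rewrite /mutual_info.
  have -> : rsum (fun x => pX P x * ln (pX P x)) =
            tsum len (fun t => rsum (fun x => pXT pi P x t * ln (pX P x))).
    rewrite /rsum tsum_sum; apply: eq_bigr => x _.
    rewrite (@tsum_ext M len _ (fun t => ln (pX P x) * pXT pi P x t)); last by move=> r; ring.
    by rewrite tsum_scal HtW Rmult_comm.
  rewrite -!tsum_scal -tsum_split; apply: tsum_ext => t.
  rewrite /A /rsum -!sum_scal -sum_split; apply: eq_bigr => x _.
  case: (Rlt_dec 0 (pXT pi P x t)) => HW /=; last first.
    have -> : pXT pi P x t = 0 by have := HW0 x t; lra.
    ring.
  have HpX : 0 < pX P x.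
    case: (Rlt_dec 0 (pX P x)) => // HpX; exfalso.
    have Hz : forall l, P x l = 0.
      move=> l; have := sum_term_le l (HP x); change (\big[Rplus/R0]_l P x l) with (pX P x).
      have := HP x l; have := HpX0 x; lra.
    have : pXT pi P x t = 0 by apply: sum_zero => l; rewrite Hz Rmult_0_l.
    lra.
  have HpT : 0 < pT pi P t.
    apply: Rlt_le_trans HW _; exact: (sum_term_le x (F := fun x => pXT pi P x t) (HW0^~ t)).
  rewrite /log2R.
  have -> : ln (pXT pi P x t / pT pi P t) =
            ln (pXT pi P x t / (pX P x * pT pi P t)) + ln (pX P x).
    rewrite -ln_mult; last by [].
      congr ln; field; lra.
    apply: Rdiv_lt_0_compat => //; exact: Rmult_lt_0_compat.
  field; lra.
have HAB : tsum len A + tsum len B <= Lam P.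
  rewrite -tsum_split; apply: Rle_trans Htree; right; apply: tsum_ext => t; by rewrite LamL.
rewrite MI LamP in HAB *.
have -> : (/ ln 2 * tsum len A + - / ln 2 * rsum (fun x => pX P x * ln (pX P x))) * ln 2 =
          tsum len A - rsum (fun x => pX P x * ln (pX P x)) by field; lra.
lra.
Qed.

Unset Implicit Arguments.
Set Strict Implicit.

Theorem theorem3p5 (b c : R) (n : nat) (X M : finType)
  (P : X -> {ffun 'I_n -> bool} -> R) (pi : protocol n X M) (len : nat) :
  0 <= b < 1 -> 0 < c < 1 ->
  (forall x l, 0 <= P x l) ->
  rsum (fun x => pX P x) = 1 ->
  valid_protocol pi len ->
  (forall (i : 'I_n) (x : X), 0 < pX P x -> pXL P i x / pX P x = b) ->
  (forall (i : 'I_n) (x : X) (t : seq M), 0 < pXT pi P x t ->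
      pLXT pi P i x t / pXT pi P x t <= c) ->
  mutual_info pi P len <= (- b * log2R (1 - c) + c * log2R (1 - b)) / c * INR n.
Proof.
move=> Hb Hc HP Hsum Hv HbX Hpost.
have H := final_bound Hb Hc HP Hsum Hv HbX Hpost.
have Hln2 : 0 < ln 2 by have := ln_lt_2; lra.
apply: (Rmult_le_reg_r (ln 2)) => //.
have -> : (- b * log2R (1 - c) + c * log2R (1 - b)) / c * INR n * ln 2 =
          INR n * ln (1 - b) - ln (1 - c) / c * (INR n * b).
  rewrite /log2R; field; lra.
exact: H.
Qed.
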